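(* Let $(G^A_n)_{n\in\mathbb{N}}$ and $(G^B_n)_{n\in\mathbb{N}}$ be bi-iteratively constructible families of graphs. Then the family $(G^A_n\sqcup G^B_n)_{n\in\mathbb{N}}$ of disjoint unions is bi-iteratively constructible. If both families are iteratively constructible, then so is $(G^A_n\sqcup G^B_n)_{n\in\mathbb{N}}$.
   Context: A $k$-graph is $G=(V,E;R_1,\dots,R_k)$ where $(V,E)$ is a finite simple graph (its underlying graph) and $R_1,\dots,R_k$ (the labels, possibly empty) partition $V$. Basic operations on $k$-graphs: $Add_i$ adds a new isolated vertex to $R_i$; $\rho_{i\to j}$ moves all vertices of $R_i$ into $R_j$, leaving $R_i$ empty; $\eta_{i,j}$ adds all edges between $R_i$ and $R_j$; for $b\in\mathbb{N}$, $\eta^b_{i,j}$ acts as $\eta_{i,j}$ if $|R_i\cup R_j|\le b$ and otherwise does nothing; $\delta_{i,j}$ removes all edges between $R_i$ and $R_j$. An elementary operation is a finite composition of basic operations; $id$ is the empty composition. A sequence of $k$-graphs is an $F$-iteration family if $G_{n+1}=F(G_n)$ for all $n$ ($G_0$ a $k$-graph, $F$ elementary), and an $(H,F,L)$-bi-iteration family if $G_{n+1}=H(F^n(L(G_n)))$ for all $n$, $F^n$ denoting $n$-fold application. A sequence of graphs is (bi-)iteratively constructible if for some $k$ it is the sequence of underlying graphs of an iteration (resp. bi-iteration) family of $k$-graphs. *)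

(* Defs.v *)
From mathcomp Require Import all_boot.
Set Implicit Arguments. Unset Strict Implicit. Unset Printing Implicit Defensive.

Record graph := Graph { gn : nat; gadj : rel 'I_gn }.

Definition graph_iso (G H : graph) : Prop :=
  exists f : 'I_(gn G) -> 'I_(gn H),
    bijective f /\ forall x y, gadj x y = gadj (f x) (f y).

Definition gunion (G H : graph) : graph :=
  @Graph (gn G + gn H) (fun x y =>
    match split x, split y with
    | inl a, inl b => gadj a b
    | inr a, inr b => gadj a b
    | _, _ => false
    end).

(* k-graphs: vertices 0..kn-1, adjacency and labelling given on nat
   (only values on vertices < kn matter); labels in 'I_k. *)
Record kgraph (k : nat) := KGraph {
  kn : nat; kadj : nat -> nat -> bool; klab : nat -> 'I_k }.

Definition kwf k (G : kgraph k) : Prop :=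
  (forall x y, x < kn G -> y < kn G -> kadj G x y = kadj G y x) /\
  (forall x, x < kn G -> kadj G x x = false).

Definition underlying k (G : kgraph k) : graph :=
  @Graph (kn G) (fun x y => kadj G x y).

Inductive basic_op (k : nat) :=
| Add of 'I_k
| Rho of 'I_k & 'I_k
| Eta of 'I_k & 'I_k
| EtaB of nat & 'I_k & 'I_k
| Delta of 'I_k & 'I_k.

Definition between k (G : kgraph k) (i j : 'I_k) (x y : nat) : bool :=
  ((klab G x == i) && (klab G y == j)) || ((klab G x == j) && (klab G y == i)).

Definition eta_op k (i j : 'I_k) (G : kgraph k) : kgraph k :=
  @KGraph k (kn G)
    (fun x y => kadj G x y ||
       [&& x != y, x < kn G, y < kn G & between G i j x y])
    (klab G).

Definition apply_basic k (o : basic_op k) (G : kgraph k) : kgraph k :=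
  match o with
  | Add i => @KGraph k (kn G).+1
      (fun x y => [&& kadj G x y, x < kn G & y < kn G])
      (fun x => if x == kn G then i else klab G x)
  | Rho i j => @KGraph k (kn G) (kadj G)
      (fun x => if klab G x == i then j else klab G x)
  | Eta i j => eta_op i j G
  | EtaB b i j =>
      if count (fun x => (klab G x == i) || (klab G x == j)) (iota 0 (kn G)) <= b
      then eta_op i j G else G
  | Delta i j => @KGraph k (kn G)
      (fun x y => kadj G x y && ~~ between G i j x y) (klab G)
  end.

(* elementary operation: finite composition of basic operations,
   applied left to right; [::] is id *)
Definition elem_op (k : nat) := seq (basic_op k).

Definition apply_elem k (F : elem_op k) (G : kgraph k) : kgraph k :=
  foldl (fun H o => apply_basic o H) G F.

Definition iter_family k (G0 : kgraph k) (F : elem_op k) (n : nat) : kgraph k :=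
  iter n (apply_elem F) G0.

Fixpoint bi_iter_family k (G0 : kgraph k) (H F L : elem_op k) (n : nat)
  : kgraph k :=
  match n with
  | 0 => G0
  | m.+1 => apply_elem H (iter m (apply_elem F)
                            (apply_elem L (bi_iter_family G0 H F L m)))
  end.

Definition iteratively_constructible (Gs : nat -> graph) : Prop :=
  exists k (G0 : kgraph k) (F : elem_op k),
    kwf G0 /\ forall n, graph_iso (Gs n) (underlying (iter_family G0 F n)).

Definition bi_iteratively_constructible (Gs : nat -> graph) : Prop :=
  exists k (G0 : kgraph k) (H F L : elem_op k),
    kwf G0 /\ forall n, graph_iso (Gs n) (underlying (bi_iter_family G0 H F L n)).

(* Main.v *)
Require Import Defs.
From mathcomp Require Import all_boot zify.
Set Implicit Arguments. Unset Strict Implicit. Unset Printing Implicit Defensive.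

Definition map_op k ka (g : 'I_ka -> 'I_k) (o : basic_op ka) : basic_op k :=
  match o with
  | Add i => Add (g i) | Rho i j => Rho (g i) (g j) | Eta i j => Eta (g i) (g j)
  | EtaB b i j => EtaB b (g i) (g j) | Delta i j => Delta (g i) (g j) end.

Record sim k ka kb (ga : 'I_ka -> 'I_k) (gb : 'I_kb -> 'I_k)
  (A : kgraph ka) (B : kgraph kb) (C : kgraph k) (fa fb : nat -> nat) : Prop := Sim {
 s_n : kn C = kn A + kn B;
 s_ra : forall x, x < kn A -> fa x < kn C;
 s_rb : forall y, y < kn B -> fb y < kn C;
 s_ia : forall x x', x < kn A -> x' < kn A -> fa x = fa x' -> x = x';
 s_ib : forall y y', y < kn B -> y' < kn B -> fb y = fb y' -> y = y';
 s_d : forall x y, x < kn A -> y < kn B -> fa x <> fb y;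
 s_la : forall x, x < kn A -> klab C (fa x) = ga (klab A x);
 s_lb : forall y, y < kn B -> klab C (fb y) = gb (klab B y);
 s_aa : forall x x', x < kn A -> x' < kn A -> kadj C (fa x) (fa x') = kadj A x x';
 s_ab : forall y y', y < kn B -> y' < kn B -> kadj C (fb y) (fb y') = kadj B y y';
 s_c1 : forall x y, x < kn A -> y < kn B -> kadj C (fa x) (fb y) = false;
 s_c2 : forall x y, x < kn A -> y < kn B -> kadj C (fb y) (fa x) = false }.

Lemma sim_sym k ka kb (ga : 'I_ka -> 'I_k) (gb : 'I_kb -> 'I_k) A B C fa fb :
  sim ga gb A B C fa fb -> sim gb ga B A C fb fa.
Proof.
move=> S; constructor; try by case: S.
by rewrite (s_n S) addnC.
by move=> x y hx hy E; exact: (s_d S hy hx (esym E)).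
by move=> x y hx hy; exact: (s_c2 S hy hx).
by move=> x y hx hy; exact: (s_c1 S hy hx).
Qed.

Lemma between_a k ka kb (ga : 'I_ka -> 'I_k) (gb : 'I_kb -> 'I_k) A B C fa fb i j x x' :
  injective ga -> sim ga gb A B C fa fb -> x < kn A -> x' < kn A ->
  between C (ga i) (ga j) (fa x) (fa x') = between A i j x x'.
Proof.
move=> gi S hx hx'; rewrite /between !(s_la S) // !(inj_eq gi) //.
Qed.

Lemma between_b k ka kb (ga : 'I_ka -> 'I_k) (gb : 'I_kb -> 'I_k) A B C fa fb i j y y' :
  (forall a b, ga a != gb b) -> sim ga gb A B C fa fb -> y < kn B ->
  between C (ga i) (ga j) (fb y) y' = false.
Proof.
move=> gd S hy; rewrite /between !(s_lb S) //.
by rewrite ![gb _ == ga _]eq_sym !(negbTE (gd _ _)) ?andbF ?andFb.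
Qed.

Lemma between_b' k ka kb (ga : 'I_ka -> 'I_k) (gb : 'I_kb -> 'I_k) A B C fa fb i j y y' :
  (forall a b, ga a != gb b) -> sim ga gb A B C fa fb -> y < kn B ->
  between C (ga i) (ga j) y' (fb y) = false.
Proof.
move=> gd S hy; rewrite /between !(s_lb S) //.
by rewrite ![gb _ == ga _]eq_sym !(negbTE (gd _ _)) ?andbF ?andFb.
Qed.


Section Step.
Variables (k ka kb : nat) (ga : 'I_ka -> 'I_k) (gb : 'I_kb -> 'I_k).
Hypothesis gi : injective ga.
Hypothesis gd : forall a b, ga a != gb b.

Lemma sim_eta A B C fa fb i j : sim ga gb A B C fa fb ->
  sim ga gb (eta_op i j A) B (eta_op (ga i) (ga j) C) fa fb.
Proof.
move=> S; constructor; try by case: S.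
- move=> x x' hx hx' /=.
  have E : (fa x == fa x') = (x == x') by apply/eqP/eqP => [/(s_ia S hx hx')|->].
  by rewrite (s_aa S) // E (between_a i j gi S) // (s_ra S hx) (s_ra S hx') hx hx'.
- move=> y y' hy hy' /=.
  by rewrite (s_ab S) // (between_b i j _ gd S) // !andbF orbF.
- move=> x y hx hy /=.
  by rewrite (s_c1 S) // (between_b' i j _ gd S) // !andbF.
- move=> x y hx hy /=.
  by rewrite (s_c2 S) // (between_b i j _ gd S) // !andbF.
Qed.

Lemma count_sim A B C fa fb (p : pred nat) : sim ga gb A B C fa fb ->
  count p (iota 0 (kn C)) =
  count (p \o fa) (iota 0 (kn A)) + count (p \o fb) (iota 0 (kn B)).
Proof.
move=> S.
set s := map fa (iota 0 (kn A)) ++ map fb (iota 0 (kn B)).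
have us : uniq s.
  rewrite cat_uniq !map_inj_in_uniq ?iota_uniq //=.
  - rewrite andbT; apply/hasPn => z /mapP [y hy ->]; apply/mapP => [[x hx E]].
    move: hx hy; rewrite !mem_iota /= => hx hy.
    exact: (s_d S hx hy (esym E)).
  - by move=> y y'; rewrite !mem_iota /=; apply: (s_ib S).
  - by move=> x x'; rewrite !mem_iota /=; apply: (s_ia S).
have sub : {subset s <= iota 0 (kn C)}.
  move=> z; rewrite mem_cat => /orP [] /mapP [x].
    by rewrite mem_iota /= => hx ->; rewrite mem_iota /=; exact: (s_ra S hx).
  by rewrite mem_iota /= => hx ->; rewrite mem_iota /=; exact: (s_rb S hx).
have sz : size (iota 0 (kn C)) <= size s.
  by rewrite size_iota size_cat !size_map !size_iota (s_n S).
have [_ E] := uniq_min_size us sub sz.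
have P : perm_eq s (iota 0 (kn C)) by apply: uniq_perm => //; exact: iota_uniq.
by rewrite -(permP P) count_cat !count_map.
Qed.

Lemma sim_etab A B C fa fb b i j : sim ga gb A B C fa fb ->
  sim ga gb (apply_basic (EtaB b i j) A) B (apply_basic (EtaB b (ga i) (ga j)) C) fa fb.
Proof.
move=> S /=.
set pC := (fun x => (klab C x == ga i) || (klab C x == ga j)).
set pA := (fun x => (klab A x == i) || (klab A x == j)).
have E : count pC (iota 0 (kn C)) = count pA (iota 0 (kn A)).
  rewrite (count_sim _ S) (@eq_in_count _ _ pred0 (iota 0 (kn B))); last first.
    by move=> y; rewrite mem_iota /= => hy; rewrite /pC (s_lb S hy) ![gb _ == _]eq_sym !(negbTE (gd _ _)).
  rewrite count_pred0 addn0; apply: eq_in_count => x; rewrite mem_iota /= => hx.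
  by rewrite /pC /pA (s_la S hx) !(inj_eq gi).
by rewrite E; case: ifP => _ //; apply: sim_eta.
Qed.
Lemma sim_add A B C fa fb i : sim ga gb A B C fa fb ->
  sim ga gb (apply_basic (Add i) A) B (apply_basic (Add (ga i)) C)
    (fun x => if x == kn A then kn C else fa x) fb.
Proof.
move=> S.
have ra := s_ra S; have rb := s_rb S.
constructor.
all: simpl.
  + by rewrite (s_n S) addSn.
  + move=> x; rewrite ltnS leq_eqVlt => /orP [/eqP->|hx]; first by rewrite eqxx.
    by rewrite (ltn_eqF hx) ltnS ltnW // ra.
  + by move=> y hy; rewrite ltnS ltnW // rb.
  + move=> x x'; rewrite ltnS leq_eqVlt => /orP [/eqP->|hx]; rewrite ltnS leq_eqVlt => /orP [/eqP->|hx'] //;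
      rewrite ?eqxx ?(ltn_eqF hx) ?(ltn_eqF hx').
    * by move=> E; have := ra _ hx'; rewrite -E ltnn.
    * by move=> E; have := ra _ hx; rewrite E ltnn.
    * exact: (s_ia S).
  + exact: (s_ib S).
  + move=> x y; rewrite ltnS leq_eqVlt => /orP [/eqP->|hx] hy.
      by rewrite eqxx => E; have := rb _ hy; rewrite -E ltnn.
    by rewrite (ltn_eqF hx); exact: (s_d S).
  + move=> x; rewrite ltnS leq_eqVlt => /orP [/eqP->|hx]; first by rewrite !eqxx.
    by rewrite (ltn_eqF hx) (ltn_eqF (ra _ hx)) (s_la S hx).
  + by move=> y hy; rewrite (ltn_eqF (rb _ hy)) (s_lb S hy).
  + move=> x x'; rewrite ltnS leq_eqVlt => /orP [/eqP->|hx]; rewrite ltnS leq_eqVlt => /orP [/eqP->|hx'].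
    * by rewrite eqxx !ltnn !andbF.
    * by rewrite eqxx (ltn_eqF hx') !ltnn !andbF.
    * by rewrite eqxx (ltn_eqF hx) !ltnn !andbF.
    * by rewrite (ltn_eqF hx) (ltn_eqF hx') (s_aa S) // hx hx' (ra _ hx) (ra _ hx').
  + by move=> y y' hy hy'; rewrite (s_ab S hy hy') (rb _ hy) (rb _ hy') !andbT.
  + move=> x y; rewrite ltnS leq_eqVlt => /orP [/eqP->|hx] hy.
      by rewrite eqxx ltnn !andbF.
    by rewrite (ltn_eqF hx) (s_c1 S).
  + move=> x y; rewrite ltnS leq_eqVlt => /orP [/eqP->|hx] hy.
      by rewrite eqxx ltnn !andbF.
    by rewrite (ltn_eqF hx) (s_c2 S).
Qed.
Lemma sim_step A B C fa fb o : sim ga gb A B C fa fb ->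
  exists fa', sim ga gb (apply_basic o A) B (apply_basic (map_op ga o) C) fa' fb.
Proof.
move=> S; case: o => [i|i j|i j|b i j|i j].
- exact: (ex_intro _ _ (sim_add i S)).
- exists fa; constructor; try by case: S.
  + by move=> x hx /=; rewrite (s_la S hx) (inj_eq gi); case: ifP.
  + by move=> y hy /=; rewrite (s_lb S hy) eq_sym (negbTE (gd _ _)).
- by exists fa; apply: sim_eta.
- by exists fa; apply: sim_etab.
- exists fa; constructor; try by case: S.
  + by move=> x x' hx hx' /=; rewrite (s_aa S) // (between_a i j gi S).
  + by move=> y y' hy hy' /=; rewrite (s_ab S) // (between_b i j _ gd S) // andbT.
  + by move=> x y hx hy /=; rewrite (s_c1 S).
  + by move=> x y hx hy /=; rewrite (s_c2 S).
Qed.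
End Step.


Definition comb k ka kb (ga : 'I_ka -> 'I_k) (gb : 'I_kb -> 'I_k)
  (FA : elem_op ka) (FB : elem_op kb) : elem_op k :=
  map (map_op ga) FA ++ map (map_op gb) FB.

Definition Inv k ka kb (ga : 'I_ka -> 'I_k) (gb : 'I_kb -> 'I_k) A B C :=
  exists fa fb, sim ga gb A B C fa fb.

Lemma apply_elem_cat k (s1 s2 : elem_op k) G :
  apply_elem (s1 ++ s2) G = apply_elem s2 (apply_elem s1 G).
Proof. by rewrite /apply_elem foldl_cat. Qed.

Section Lift.
Variables (k ka kb : nat) (ga : 'I_ka -> 'I_k) (gb : 'I_kb -> 'I_k).
Hypothesis gai : injective ga.
Hypothesis gbi : injective gb.
Hypothesis gd : forall a b, ga a != gb b.

Lemma inv_elemA (kx ky : nat) (gx : 'I_kx -> 'I_k) (gy : 'I_ky -> 'I_k) :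
  injective gx -> (forall a b, gx a != gy b) ->
  forall F A B C, Inv gx gy A B C ->
  Inv gx gy (apply_elem F A) B (apply_elem (map (map_op gx) F) C).
Proof.
move=> gxi gxd; elim=> [|o F IH] A B C [fa [fb S]] /=; first by exists fa, fb.
have [fa' S'] := sim_step gxi gxd o S.
exact: (IH _ _ _ (ex_intro _ fa' (ex_intro _ fb S'))).
Qed.

Lemma inv_sym A B C : Inv ga gb A B C -> Inv gb ga B A C.
Proof. by move=> [fa [fb S]]; exists fb, fa; apply: sim_sym. Qed.

Lemma inv_sym' A B C : Inv gb ga B A C -> Inv ga gb A B C.
Proof. by move=> [fa [fb S]]; exists fb, fa; apply: sim_sym. Qed.

Lemma inv_elem FA FB A B C : Inv ga gb A B C ->
  Inv ga gb (apply_elem FA A) (apply_elem FB B) (apply_elem (comb ga gb FA FB) C).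
Proof.
move=> I; rewrite /comb apply_elem_cat.
have I1 := inv_elemA gai gd FA I.
apply: inv_sym'; apply: inv_elemA => //.
  by move=> a b; rewrite eq_sym.
exact: inv_sym.
Qed.

Lemma inv_iter FA FB A B C n : Inv ga gb A B C ->
  Inv ga gb (iter n (apply_elem FA) A) (iter n (apply_elem FB) B)
    (iter n (apply_elem (comb ga gb FA FB)) C).
Proof. by move=> I; elim: n => [|n IH] //=; apply: inv_elem. Qed.

Lemma inv_bi HA FA LA HB FB LB A B C n : Inv ga gb A B C ->
  Inv ga gb (bi_iter_family A HA FA LA n) (bi_iter_family B HB FB LB n)
    (bi_iter_family C (comb ga gb HA HB) (comb ga gb FA FB) (comb ga gb LA LB) n).
Proof.
move=> I; elim: n => [|n IH] //=.
by apply: inv_elem; apply: inv_iter; apply: inv_elem.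
Qed.

Lemma iso_union GA GB A B C : Inv ga gb A B C ->
  graph_iso GA (underlying A) -> graph_iso GB (underlying B) ->
  graph_iso (gunion GA GB) (underlying C).
Proof.
move=> [fa [fb S]] [pa [bpa ea]] [pb [bpb eb]].
have ra (a : 'I_(gn GA)) : fa (pa a) < kn C := s_ra S (ltn_ord (pa a)).
have rb (b : 'I_(gn GB)) : fb (pb b) < kn C := s_rb S (ltn_ord (pb b)).
pose h' (u : 'I_(gn GA) + 'I_(gn GB)) : 'I_(kn C) :=
  match u with inl a => Ordinal (ra a) | inr b => Ordinal (rb b) end.
exists (fun x => h' (split x)); split.
- apply: inj_card_bij.
  + move=> x y /(congr1 val) E; rewrite -(splitK x) -(splitK y); move: E.
    case: (split x) => a; case: (split y) => b /= E.
    * congr (unsplit (inl _)); apply: (bij_inj bpa); apply: val_inj.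
      exact: (s_ia S (ltn_ord _) (ltn_ord _) E).
    * by case: (s_d S (ltn_ord (pa a)) (ltn_ord (pb b)) E).
    * by case: (s_d S (ltn_ord (pa b)) (ltn_ord (pb a)) (esym E)).
    * congr (unsplit (inr _)); apply: (bij_inj bpb); apply: val_inj.
      exact: (s_ib S (ltn_ord _) (ltn_ord _) E).
  + rewrite !card_ord /= (s_n S).
    by have := bij_eq_card bpa; have := bij_eq_card bpb; rewrite !card_ord /= => -> ->.
- move=> x y /=.
  case: (split x) => a; case: (split y) => b /=.
  + by rewrite ea /= (s_aa S).
  + by rewrite (s_c1 S).
  + by rewrite (s_c2 S).
  + by rewrite eb /= (s_ab S).
Qed.
End Lift.

Definition comb0 ka kb (A : kgraph ka) (B : kgraph kb) : kgraph (ka + kb) :=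
  @KGraph (ka + kb) (kn A + kn B)
    (fun x y => if x < kn A then (y < kn A) && kadj A x y
                else (kn A <= y) && kadj B (x - kn A) (y - kn A))
    (fun x => if x < kn A then lshift kb (klab A x) else rshift ka (klab B (x - kn A))).

Lemma comb0_sim ka kb (A : kgraph ka) (B : kgraph kb) :
  sim (lshift kb) (@rshift ka kb) A B (comb0 A B) id (fun y => y + kn A).
Proof.
constructor => /=.
- by [].
- by move=> x hx; lia.
- by move=> y hy; lia.
- by [].
- by move=> y y' _ _ /eqP; rewrite eqn_add2r => /eqP.
- by move=> x y hx _; lia.
- by move=> x ->.
- by move=> y _; rewrite ltnNge leq_addl /= addnK.
- by move=> x x' -> ->.
- by move=> y y' _ _; rewrite ltnNge leq_addl /= leq_addl /= !addnK.
- by move=> x y -> _; rewrite ltnNge leq_addl.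
- by move=> x y hx _; rewrite ltnNge leq_addl /= leqNgt hx.
Qed.

Lemma comb0_wf ka kb (A : kgraph ka) (B : kgraph kb) :
  kwf A -> kwf B -> kwf (comb0 A B).
Proof.
move=> [sA iA] [sB iB]; split.
  move=> x y /= hx hy.
  case: (ltnP x (kn A)) => hxa; case: (ltnP y (kn A)) => hya //=.
    exact: sA.
  apply: sB; lia.
move=> x /= hx; case: (ltnP x (kn A)) => hxa /=; first by rewrite iA.
by rewrite iB ?andbF //; lia.
Qed.

Lemma lr_disj ka kb (a : 'I_ka) (b : 'I_kb) : lshift kb a != rshift ka b.
Proof. by rewrite -val_eqE /=; have := ltn_ord a; lia. Qed.

Theorem mainTheorem11 (GA GB : nat -> graph) :
  (bi_iteratively_constructible GA -> bi_iteratively_constructible GB ->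
   bi_iteratively_constructible (fun n => gunion (GA n) (GB n))) /\
  (iteratively_constructible GA -> iteratively_constructible GB ->
   iteratively_constructible (fun n => gunion (GA n) (GB n))).
Proof.
have gai := fun ka kb => @lshift_inj ka kb.
have gbi := fun ka kb => @rshift_inj ka kb.
split.
- move=> [ka [A0 [HA [FA [LA [wA iA]]]]]] [kb [B0 [HB [FB [LB [wB iB]]]]]].
  exists (ka + kb), (comb0 A0 B0), (comb (lshift kb) (@rshift ka kb) HA HB),
    (comb (lshift kb) (@rshift ka kb) FA FB), (comb (lshift kb) (@rshift ka kb) LA LB).
  split; first exact: comb0_wf.
  move=> n; apply: (iso_union (ga := lshift kb) (gb := @rshift ka kb) _ (iA n) (iB n)).
  apply: inv_bi => //; first exact: lr_disj.
  by exists id, (fun y => y + kn A0); apply: comb0_sim.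
- move=> [ka [A0 [FA [wA iA]]]] [kb [B0 [FB [wB iB]]]].
  exists (ka + kb), (comb0 A0 B0), (comb (lshift kb) (@rshift ka kb) FA FB).
  split; first exact: comb0_wf.
  move=> n; apply: (iso_union (ga := lshift kb) (gb := @rshift ka kb) _ (iA n) (iB n)).
  apply: inv_iter => //; first exact: lr_disj.
  by exists id, (fun y => y + kn A0); apply: comb0_sim.
Qed.
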